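(* Let $\tilde Q=\|q_{ik}\|$ ($k\in\mathbb N$, $i\in\{0,\dots,N_k-1\}$) define a $\tilde Q$-expansion of $[0,1]$. Suppose that for every sequence of digits $(i_k)_{k\ge1}$ with $i_k\in\{0,\dots,N_k-1\}$, $$\lim_{k\to\infty}\frac{\ln q_{i_kk}}{\ln\bigl(q_{i_11}q_{i_22}\cdots q_{i_{k-1}(k-1)}\bigr)}=0.$$ Then the family $\varPhi$ of interiors of the cylinders of this expansion is faithful for packing dimension calculation: $\dim_P(E,\varPhi)=\dim_{P(\mathit{unc})}(E)$ for every $E\subset[0,1]$.
   Context: $\tilde Q$-expansion: integers $N_k\ge2$, $q_{ik}>0$, $\sum_iq_{ik}=1$, $\prod_k\max_iq_{ik}=0$; with $\beta_{ik}=\sum_{l<i}q_{lk}$ each $x\in[0,1]$ is $x=\sum_k\beta_{a_kk}\prod_{j<k}q_{a_jj}$; the rank-$n$ cylinder $\{x:a_j(x)=c_j,j\le n\}$ is an interval of length $\prod_{j\le n}q_{c_jj}$. In $\mathbb R$: an uncentered $\varepsilon$-packing of $E$ is a countable family of pairwise disjoint open intervals of length $\le\varepsilon$ each meeting $E$; $\mathcal P^\alpha_{\varepsilon(\mathit{unc})}(E)=\sup\sum|E_i|^\alpha$, $\mathcal P^\alpha_{0(\mathit{unc})}=\lim_{\varepsilon\to0}$, $\mathcal P^\alpha_{(\mathit{unc})}(E)=\inf\{\sum_j\mathcal P^\alpha_{0(\mathit{unc})}(E_j):E\subset\bigcup E_j\}$, $\dim_{P(\mathit{unc})}(E)=\inf\{\alpha:\mathcal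 P^\alpha_{(\mathit{unc})}(E)=0\}$; $\dim_P(E,\varPhi)$ is the same using only packings by intervals from $\varPhi$. *)

(* Defs.v *)
From HB Require Import structures.
From mathcomp Require Import all_boot all_order all_algebra.
From mathcomp Require Import all_classical all_reals all_analysis.
Set Implicit Arguments. Unset Strict Implicit. Unset Printing Implicit Defensive.
Import Order.TTheory GRing.Theory Num.Theory.
Import numFieldNormedType.Exports.
Local Open Scope classical_set_scope.
Local Open Scope ring_scope.

Section Defs.
Variable R : realType.

(* A Q~-expansion of [0,1]; ranks are indexed from 0 (paper: from 1).
   q i k is q_{ik}, for digit i < N k. *)
Definition maxq (N : nat -> nat) (q : nat -> nat -> R) (k : nat) : R :=
  \big[Num.max/0]_(i < N k) q i k.

Definition Qexpansion (N : nat -> nat) (q : nat -> nat -> R) : Prop :=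
  [/\ (forall k, (2 <= N k)%N),
      (forall k i, (i < N k)%N -> 0 < q i k),
      (forall k, \sum_(i < N k) q i k = 1) &
      (fun n => \prod_(k < n) maxq N q k) @ \oo --> (0 : R)].

Definition beta (q : nat -> nat -> R) (i k : nat) : R := \sum_(l < i) q l k.

Definition cyl_left (q : nat -> nat -> R) (n : nat) (c : nat -> nat) : R :=
  \sum_(j < n) beta q (c j) j * \prod_(l < j) q (c l) l.
Definition cyl_len (q : nat -> nat -> R) (n : nat) (c : nat -> nat) : R :=
  \prod_(j < n) q (c j) j.

(* An open interval ]a,b[ is represented by the pair (a,b). *)
Definition oint (I : R * R) : set R := [set x | I.1 < x < I.2].

Definition cyl_interiors (N : nat -> nat) (q : nat -> nat -> R) : set (R * R) :=
  [set I | exists n c, (1 <= n)%N /\ (forall j, (j < n)%N -> (c j < N j)%N) /\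
     I = (cyl_left q n c, cyl_left q n c + cyl_len q n c)].

(* eps-packing of E by open intervals from the admissible family adm
   (adm = setT gives the uncentered packings). *)
Definition packing (adm : set (R * R)) (eps : R) (E : set R) (F : set (R * R)) : Prop :=
  [/\ countable F, F `<=` adm,
      (forall I, F I -> I.2 - I.1 <= eps /\ oint I `&` E !=set0) &
      (forall I J, F I -> F J -> I <> J -> oint I `&` oint J = set0)].

Definition Peps (adm : set (R * R)) (alpha eps : R) (E : set R) : \bar R :=
  ereal_sup [set (\esum_(I in F) ((I.2 - I.1) `^ alpha)%:E)%E
            | F in packing adm eps E].

(* P_0 = lim_{eps -> 0} P_eps, which (P_eps being monotone in eps) is the infimum *)
Definition P0 (adm : set (R * R)) (alpha : R) (E : set R) : \bar R :=
  ereal_inf [set Peps adm alpha eps E | eps in [set e : R | 0 < e]].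

Definition Pmeas (adm : set (R * R)) (alpha : R) (E : set R) : \bar R :=
  ereal_inf [set (\sum_(j <oo) P0 adm alpha (Es j))%E
            | Es in [set Es : nat -> set R | E `<=` \bigcup_j Es j]].

Definition dimP (adm : set (R * R)) (E : set R) : \bar R :=
  ereal_inf [set alpha%:E | alpha in [set a : R | 0 <= a /\ Pmeas adm a E = 0%E]].

End Defs.

(* Main.v *)
Require Import Defs.
From HB Require Import structures.
From mathcomp Require Import all_boot all_order all_algebra.
From mathcomp Require Import all_classical all_reals all_analysis.
From mathcomp Require Import zify ring lra.
Import Order.TTheory GRing.Theory Num.Theory.
Import numFieldNormedType.Exports.
Set Implicit Arguments. Unset Strict Implicit. Unset Printing Implicit Defensive.
Local Open Scope classical_set_scope.
Local Open Scope ring_scope.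

Section Pack.
Variable R : realType.
Implicit Types (adm : set (R * R)) (E : set R) (s : seq (R * R)).

Definition len (I : R * R) := I.2 - I.1.

Definition pkl adm (eps : R) E s :=
  [/\ uniq s, (forall I, I \in s -> adm I),
      (forall I, I \in s -> len I <= eps /\ oint I `&` E !=set0) &
      (forall I J, I \in s -> J \in s -> I <> J -> oint I `&` oint J = set0)].

Lemma Peps_le adm a eps E (X : \bar R) :
  (forall s, pkl adm eps E s -> ((\sum_(I <- s) len I `^ a)%:E <= X)%E) ->
  (Peps adm a eps E <= X)%E.
Proof.
move=> h; rewrite /Peps; apply: ge_ereal_sup => _ [F [_ hadm hlen hdisj] <-].
rewrite /esum; apply: ge_ereal_sup => _ [A [hfin hAF] <-].
have [s0 hs0] := (finite_seqP A).1 hfin.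
have eA : A = [set` undup s0].
  by rewrite hs0; apply/seteqP; split => x /=; rewrite mem_undup.
rewrite eA -fsbig_seq ?undup_uniq // sumEFin; apply: h; split.
- exact: undup_uniq.
- by move=> I hI; apply: hadm; apply: hAF; rewrite eA.
- by move=> I hI; apply: hlen; apply: hAF; rewrite eA.
- by move=> I J hI hJ; apply: hdisj; apply: hAF; rewrite eA.
Qed.

Lemma Peps_ge adm a eps E s : pkl adm eps E s ->
  ((\sum_(I <- s) len I `^ a)%:E <= Peps adm a eps E)%E.
Proof.
move=> [hu hadm hlen hdisj]; rewrite /Peps; apply: le_ereal_sup_tmp.
exists (\esum_(I in [set` s]) ((I.2 - I.1) `^ a)%:E)%E.
  exists [set` s] => //; split.
  - exact: finite_set_countable (finite_seq s).
  - by move=> I; apply: hadm.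
  - by move=> I; apply: hlen.
  - by move=> I J; apply: hdisj.
rewrite esum_fset; last by move=> i _; rewrite lee_fin powR_ge0.
  by rewrite -fsbig_seq // sumEFin.
exact: finite_seq.
Qed.

Lemma Peps_ge0 adm a eps E : (0 <= Peps adm a eps E)%E.
Proof.
have := @Peps_ge adm a eps E [::]; rewrite big_nil; apply; split => //.
Qed.

Lemma P0_ge0 adm a E : (0 <= P0 adm a E)%E.
Proof. by apply: le_ereal_inf_tmp => _ [e _ <-]; apply: Peps_ge0. Qed.

Lemma P0_le adm a E eps : 0 < eps -> (P0 adm a E <= Peps adm a eps E)%E.
Proof. by move=> he; apply: ereal_inf_lbound; exists eps. Qed.

Lemma Pmeas_ge0 adm a E : (0 <= Pmeas adm a E)%E.
Proof.
apply: le_ereal_inf_tmp => _ [Es _ <-]; apply: nneseries_ge0 => n _ _.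
exact: P0_ge0.
Qed.

Lemma count_le1 (T : eqType) (p : pred T) (c : seq T) : uniq c ->
  (forall x y, x \in c -> y \in c -> p x -> p y -> x = y) -> (count p c <= 1)%N.
Proof.
elim: c => [//|a c IH] /= /andP [ha hu] h.
case: (boolP (p a)) => pa /=.
  rewrite -[X in (_ <= X)%N]addn0 leq_add2l leqn0 eqn0Ngt -has_count.
  apply/hasPn => y yc; apply/negP => py.
  by move: ha; rewrite (h a y (mem_head _ _) _ pa py) ?yc // in_cons yc orbT.
rewrite add0n; apply: IH => // x y hx hy; apply: h; rewrite in_cons ?hx ?hy orbT //.
Qed.

Lemma count_sub3 (T : eqType) (P p1 p2 p3 : pred T) (c : seq T) :
  (forall x, x \in c -> P x -> [|| p1 x, p2 x | p3 x]) ->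
  (count P c <= count p1 c + count p2 c + count p3 c)%N.
Proof.
elim: c => [//|a c IH] h /=.
have IH' := IH (fun x hx => h x (introT orP (or_intror hx))).
have ha := h a (mem_head _ _).
case: (P a) ha => [/(_ isT)|_]; last first.
  by move: IH'; rewrite add0n; lia.
case/or3P => -> /=; rewrite !addnA; lia.
Qed.

Lemma sum1_mem (T : eqType) (a : T) (t : seq T) : a \in t -> (1 <= \sum_(y <- t) (a == y))%N.
Proof.
elim: t => [//|b t IH]; rewrite in_cons big_cons => /orP [/eqP ->|h].
  by rewrite eqxx.
by rewrite (leq_trans (IH h)) // leq_addl.
Qed.

Lemma size_le_fibers (T U : eqType) (f : T -> U) (c : seq T) (t : seq U) :
  (forall x, x \in c -> f x \in t) ->
  (size c <= \sum_(y <- t) count (fun x => f x == y) c)%N.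
Proof.
elim: c => [|a c IH] h; first by [].
rewrite /= (eq_bigr (fun y => (f a == y) + count (fun x => f x == y) c)%N) //.
rewrite big_split /= -add1n leq_add //.
  exact: sum1_mem (h a (mem_head _ _)).
by apply: IH => x hx; apply: h; rewrite in_cons hx orbT.
Qed.

Lemma disj_order (I J : R * R) : I.1 < I.2 -> J.1 < J.2 -> oint I `&` oint J = set0 ->
  I.2 <= J.1 \/ J.2 <= I.1.
Proof.
move=> hI hJ hd; case: (lerP I.2 J.1) => h1; first by left.
case: (lerP J.2 I.1) => h2; first by right.
pose lo := Num.max I.1 J.1; pose hi := Num.min I.2 J.2.
have hlh : lo < hi by rewrite /lo /hi gt_max !lt_min hI hJ h1 h2.
have [m1 m2] := midf_lt hlh.
have : (oint I `&` oint J) ((lo + hi) / 2).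
  split; rewrite /oint /=; apply/andP; split.
  - by apply: le_lt_trans m1; rewrite le_max lexx.
  - by apply: (lt_le_trans m2); rewrite ge_min lexx.
  - by apply: le_lt_trans m1; rewrite le_max lexx orbT.
  - by apply: (lt_le_trans m2); rewrite ge_min lexx orbT.
by rewrite hd.
Qed.

Lemma geom_le (x : R) K : 0 <= x < 1 -> \sum_(k < K) x ^+ k <= (1 - x)^-1.
Proof.
move=> /andP [h0 h1].
have hx : 0 < 1 - x by rewrite subr_gt0.
have e : \sum_(k < K) x ^+ k = (1 - x ^+ K) / (1 - x).
  apply: (mulIf (lt0r_neq0 hx)); rewrite mulfVK ?lt0r_neq0 //.
  by rewrite -opprB mulrN mulrC -subrX1 opprB.
rewrite e ler_pdivrMr // mulVf ?lt0r_neq0 // lerBlDr lerDl.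
exact: exprn_ge0.
Qed.

Lemma sum_split_cls (T : eqType) (s : seq T) (g : T -> R) (cls : nat -> pred T) (K : nat) :
  (forall I, 0 <= g I) -> (forall I, I \in s -> exists2 k, (k < K)%N & cls k I) ->
  \sum_(I <- s) g I <= \sum_(k < K) \sum_(I <- s | cls k I) g I.
Proof.
move=> hg hs.
under [X in _ <= X]eq_bigr => k _ do rewrite big_mkcond.
rewrite exchange_big /= [X in X <= _]big_seq [X in _ <= X]big_seq.
apply: ler_sum => I hI; have [k hk hc] := hs I hI.
rewrite (bigD1 (Ordinal hk)) //= hc lerDl sumr_ge0 // => j _.
by case: ifP.
Qed.

End Pack.

Section Cyl.
Variable R : realType.
Variables (N : nat -> nat) (q : nat -> nat -> R).
Hypothesis HN : forall k, (2 <= N k)%N.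
Hypothesis Hq : forall k i, (i < N k)%N -> 0 < q i k.
Hypothesis Hs : forall k, \sum_(i < N k) q i k = 1.

Definition valid n (c : nat -> nat) := forall j, (j < n)%N -> (c j < N j)%N.
Definition incyl n c (x : R) := cyl_left q n c < x < cyl_left q n c + cyl_len q n c.

Lemma cyl_lenS n c : cyl_len q n.+1 c = cyl_len q n c * q (c n) n.
Proof. by rewrite /cyl_len big_ord_recr. Qed.

Lemma cyl_leftS n c : cyl_left q n.+1 c = cyl_left q n c + beta q (c n) n * cyl_len q n c.
Proof. by rewrite /cyl_left big_ord_recr. Qed.

Lemma cyl_len0 c : cyl_len q 0 c = 1. Proof. by rewrite /cyl_len big_ord0. Qed.
Lemma cyl_left0 c : cyl_left q 0 c = 0. Proof. by rewrite /cyl_left big_ord0. Qed.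

Lemma validS n c : valid n.+1 c -> valid n c.
Proof. by move=> h j hj; apply: h; apply: ltnW. Qed.

Lemma valid_le n m c : (m <= n)%N -> valid n c -> valid m c.
Proof. by move=> hmn h j hj; apply: h; apply: leq_trans hmn. Qed.

Lemma cyl_len_gt0 n c : valid n c -> 0 < cyl_len q n c.
Proof.
elim: n => [|n IH] h; first by rewrite cyl_len0.
rewrite cyl_lenS mulr_gt0 //; first exact: IH (validS h).
exact: Hq (h n (ltnSn n)).
Qed.

Lemma cyl_prefix n c c' : (forall j, (j < n)%N -> c j = c' j) ->
  cyl_left q n c = cyl_left q n c' /\ cyl_len q n c = cyl_len q n c'.
Proof.
elim: n => [|n IH] h; first by rewrite !cyl_left0 !cyl_len0.
have [h1 h2] := IH (fun j hj => h j (ltnW hj)).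
by rewrite !cyl_leftS !cyl_lenS h1 h2 h.
Qed.

Lemma betaS i k : beta q i.+1 k = beta q i k + q i k.
Proof. by rewrite /beta big_ord_recr. Qed.

Lemma beta0 k : beta q 0 k = 0. Proof. by rewrite /beta big_ord0. Qed.

Lemma betaN k : beta q (N k) k = 1. Proof. exact: Hs. Qed.

Lemma beta_le i j k : (i <= j)%N -> (j <= N k)%N -> beta q i k <= beta q j k.
Proof.
move=> hij; elim: j hij => [|j IH]; first by rewrite leqn0 => /eqP ->.
rewrite leq_eqVlt => /orP [/eqP -> //|hij] hj.
rewrite betaS (le_trans (IH hij (ltnW hj))) // lerDl ltW //; exact: Hq.
Qed.

Lemma beta_ge0 i k : (i <= N k)%N -> 0 <= beta q i k.
Proof. by move=> h; rewrite -(beta0 k) beta_le. Qed.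

Lemma beta_le1 i k : (i <= N k)%N -> beta q i k <= 1.
Proof. by move=> h; rewrite -(betaN k) beta_le. Qed.

Lemma q_lt1 i k : (i < N k)%N -> q i k < 1.
Proof.
move=> hi.
have hN := HN k.
pose j := if i == 0%N then 1%N else 0%N.
have hj : (j < N k)%N by rewrite /j; case: (i == 0%N); apply: leq_trans hN.
have hij : Ordinal hi != Ordinal hj.
  by apply/eqP => -[]; rewrite /j; case: eqP => [->|/eqP ?] // ->.
rewrite -(Hs k) (bigD1 (Ordinal hi)) //= (bigD1 (Ordinal hj)) //=.
rewrite ltrDl; apply: (lt_le_trans (Hq hj)); rewrite lerDl.
  by apply: sumr_ge0 => -[l hl] _; apply: ltW; exact: Hq.
by rewrite eq_sym.
Qed.

Lemma child_left n c : valid n.+1 c -> cyl_left q n c <= cyl_left q n.+1 c.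
Proof.
move=> h; rewrite cyl_leftS lerDl mulr_ge0 //.
  by apply: beta_ge0; apply: ltnW; apply: h.
exact: ltW (cyl_len_gt0 (validS h)).
Qed.

Lemma child_right n c : valid n.+1 c ->
  cyl_left q n.+1 c + cyl_len q n.+1 c <= cyl_left q n c + cyl_len q n c.
Proof.
move=> h; rewrite cyl_leftS cyl_lenS -addrA lerD2l.
rewrite [X in X + _]mulrC -mulrDr ger_pMr; last exact: cyl_len_gt0 (validS h).
by rewrite -betaS beta_le1 //; apply: h.
Qed.

Lemma nest_left n m c : (n <= m)%N -> valid m c -> cyl_left q n c <= cyl_left q m c.
Proof.
move=> hnm; elim: m hnm => [|m IH]; first by rewrite leqn0 => /eqP ->.
rewrite leq_eqVlt => /orP [/eqP -> //|hnm] h.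
exact: le_trans (IH hnm (validS h)) (child_left h).
Qed.

Lemma nest_right n m c : (n <= m)%N -> valid m c ->
  cyl_left q m c + cyl_len q m c <= cyl_left q n c + cyl_len q n c.
Proof.
move=> hnm; elim: m hnm => [|m IH]; first by rewrite leqn0 => /eqP ->.
rewrite leq_eqVlt => /orP [/eqP -> //|hnm] h.
exact: le_trans (child_right h) (IH hnm (validS h)).
Qed.

Lemma incyl_nest n m c x : (n <= m)%N -> valid m c -> incyl m c x -> incyl n c x.
Proof.
move=> hnm h /andP [h1 h2]; apply/andP; split.
  exact: le_lt_trans (nest_left hnm h) h1.
exact: lt_le_trans h2 (nest_right hnm h).
Qed.

Lemma sibling n c c' : (forall j, (j < n)%N -> c j = c' j) ->
  (c n < c' n)%N -> (c' n < N n)%N -> valid n c ->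
  cyl_left q n.+1 c + cyl_len q n.+1 c <= cyl_left q n.+1 c'.
Proof.
move=> hp hlt hN' hv.
have [h1 h2] := cyl_prefix hp.
rewrite !cyl_leftS cyl_lenS h1 h2 -addrA lerD2l [X in X + _]mulrC -mulrDr.
rewrite [X in _ <= X]mulrC ler_wpM2l //.
  by apply: ltW; apply: cyl_len_gt0 => j hj; rewrite -hp //; apply: hv.
by rewrite -betaS beta_le // ltnW.
Qed.

Lemma incyl_uniq n c c' x : valid n c -> valid n c' -> incyl n c x -> incyl n c' x ->
  forall j, (j < n)%N -> c j = c' j.
Proof.
elim: n => [|n IH] hv hv' hx hx' j hj //.
have hp : forall j, (j < n)%N -> c j = c' j.
  apply: IH (validS hv) (validS hv') _ _.
    exact: incyl_nest (leqnSn n) hv hx.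
  exact: incyl_nest (leqnSn n) hv' hx'.
rewrite ltnS leq_eqVlt in hj; case/orP: hj => [/eqP ->|]; last exact: hp.
case: (ltngtP (c n) (c' n)) => // hlt.
- have := sibling hp hlt (hv' n (ltnSn n)) (validS hv).
  move: hx hx' => /andP [_ a] /andP [b _] hs.
  by have := lt_trans (lt_le_trans a hs) b; rewrite ltxx.
- have hp' : forall j, (j < n)%N -> c' j = c j by move=> k hk; rewrite hp.
  have := sibling hp' hlt (hv n (ltnSn n)) (validS hv').
  move: hx hx' => /andP [b _] /andP [_ a] hs.
  by have := lt_trans (lt_le_trans a hs) b; rewrite ltxx.
Qed.


Lemma beta_find_aux k t m : (1 <= m <= N k)%N -> 0 <= t <= beta q m k ->
  exists i, (i < m)%N /\ beta q i k <= t <= beta q i.+1 k.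
Proof.
elim: m => [|m IH] // /andP [h1 h2] /andP [t0 tm].
case: (leqP 1 m) => hm.
  case: (lerP t (beta q m k)) => ht.
    have [i [hi hi']] := IH (introT andP (conj hm (ltnW h2))) (introT andP (conj t0 ht)).
    by exists i; split => //; apply: ltnW.
  by exists m; split => //; rewrite (ltW ht) tm.
have em : m = 0%N by move: hm; rewrite ltnS leqn0 => /eqP.
by subst m; exists 0%N; split => //; rewrite beta0 t0.
Qed.

Lemma beta_find k t : 0 <= t <= 1 -> exists i, (i < N k)%N /\ beta q i k <= t <= beta q i.+1 k.
Proof.
move=> ht; apply: (@beta_find_aux k t (N k)).
- by rewrite leqnn andbT; apply: leq_trans (HN k).
- by rewrite betaN.
Qed.

Lemma cover x : 0 <= x <= 1 -> forall n, exists c, valid n c /\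
  cyl_left q n c <= x <= cyl_left q n c + cyl_len q n c.
Proof.
move=> hx; elim => [|n [c [hv /andP [h1 h2]]]].
  by exists (fun _ => 0%N); split => //; rewrite cyl_left0 cyl_len0 add0r.
set L := cyl_left q n c; set Ln := cyl_len q n c.
have hL : 0 < Ln by exact: cyl_len_gt0 hv.
have ht : 0 <= (x - L) / Ln <= 1.
  by rewrite divr_ge0 ?subr_ge0 ?(ltW hL) //= ler_pdivrMr // mul1r lerBlDl.
have [i [hi /andP [b1 b2]]] := beta_find n ht.
exists (fun j => if j == n then i else c j); split.
  move=> j; rewrite ltnS leq_eqVlt => /orP [/eqP ->|hj]; first by rewrite eqxx.
  by rewrite (ltn_eqF hj); apply: hv.
have hp : forall j, (j < n)%N -> (if j == n then i else c j) = c j.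
  by move=> j hj; rewrite (ltn_eqF hj).
have [e1 e2] := cyl_prefix hp.
rewrite cyl_leftS cyl_lenS e1 e2 eqxx -/L -/Ln.
rewrite ler_pdivlMr // in b1; rewrite ler_pdivrMr // in b2.
rewrite -lerBrDl b1 /=.
by rewrite -addrA -lerBlDl (le_trans b2) // betaS mulrDl [Ln * _]mulrC.
Qed.


Definition good (x : R) := 0 <= x <= 1 /\ forall n, exists c, valid n c /\ incyl n c x.

Definition dig (x : R) : nat -> nat :=
  get [set d | (forall k, (d k < N k)%N) /\ forall n, incyl n d x].

Lemma good_digits x : good x -> exists d, (forall k, (d k < N k)%N) /\ forall n, incyl n d x.
Proof.
move=> [_ hg].
have hc : forall n, {c | valid n c /\ incyl n c x}.
  by move=> n; apply: cid; exact: hg.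
pose d k := (proj1_sig (hc k.+1)) k.
have hd : forall k, (d k < N k)%N.
  by move=> k; rewrite /d; case: (hc k.+1) => c [hv _] /=; apply: hv.
exists d; split => // n.
case: (hc n) => c [hv hx].
have hp : forall j, (j < n)%N -> d j = c j.
  move=> j hj; rewrite /d; case: (hc j.+1) => c' [hv' hx'] /=.
  apply: (@incyl_uniq j.+1 c' c x hv') => //.
  - exact: valid_le hj hv.
  - exact: (incyl_nest hj hv hx).
have [e1 e2] := cyl_prefix hp.
by rewrite /incyl e1 e2.
Qed.

Lemma dig_spec x : good x -> (forall k, (dig x k < N k)%N) /\ forall n, incyl n (dig x) x.
Proof. by move=> h; have := getPex (good_digits h). Qed.


Hypothesis Hmax : (fun n => \prod_(k < n) maxq N q k) @ \oo --> (0 : R).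
Hypothesis Hlim : forall d : nat -> nat, (forall k, (d k < N k)%N) ->
     (fun k => ln (q (d k) k) / ln (\prod_(j < k) q (d j) j)) @ \oo --> (0 : R).

Definition Good (del : R) (m : nat) x :=
  good x /\ forall n, (m <= n)%N -> cyl_len q n (dig x) `^ del <= q (dig x n) n.

Lemma cyl_len_lt1 n c : valid n.+1 c -> cyl_len q n.+1 c < 1.
Proof.
elim: n => [|n IH] h.
  by rewrite cyl_lenS cyl_len0 mul1r q_lt1 //; apply: h.
rewrite cyl_lenS (le_lt_trans _ (IH (validS h))) // ger_pMr.
  exact: ltW (q_lt1 (h _ (ltnSn _))).
exact: cyl_len_gt0 (validS h).
Qed.

Lemma Good_exists del x : 0 < del -> good x -> exists m, Good del m x.
Proof.
move=> hdel hx; have [hd hin] := dig_spec hx.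
have := Hlim hd; move/cvgr0Pnorm_lt => /(_ del hdel) [N0 _ HN0].
exists N0.+1; split => // n hn.
have hvn : forall n, valid n (dig x) by move=> k j _; apply: hd.
have := HN0 n (ltnW hn); rewrite /= => hr.
case: n hn hr => [//|n] hn hr.
have hP : 0 < cyl_len q n.+1 (dig x) by exact: cyl_len_gt0.
have hP1 : cyl_len q n.+1 (dig x) < 1 by exact: cyl_len_lt1.
have hlnP : ln (cyl_len q n.+1 (dig x)) < 0 by apply: ln_lt0; rewrite hP hP1.
have hqq : 0 < q (dig x n.+1) n.+1 by apply: Hq.
have hr' := le_lt_trans (ler_norm _) hr.
rewrite -/(cyl_len q n.+1 (dig x)) ltr_ndivrMr // in hr'.
rewrite /powR (gt_eqF hP) -(lnK (x := q (dig x n.+1) n.+1)); last by rewrite posrE.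
by rewrite ler_expR ltW.
Qed.

Lemma le_bigmaxR n (f : nat -> R) i : (i < n)%N -> f i <= \big[Num.max/0]_(j < n) f j.
Proof.
elim: n f i => [//|n IH] f i.
rewrite big_ord_recl /=.
case: i => [|i] hi; first by rewrite le_max lexx.
by rewrite le_max (IH (fun j => f j.+1) i hi) orbT.
Qed.

Lemma q_le_maxq i k : (i < N k)%N -> q i k <= maxq N q k.
Proof. exact: (le_bigmaxR (fun i => q i k)). Qed.

Lemma len_le_prodmax n d : (forall k, (d k < N k)%N) ->
  cyl_len q n d <= \prod_(k < n) maxq N q k.
Proof.
move=> hd; apply: ler_prod => k _.
by rewrite q_le_maxq ?andbT //; apply: ltW; apply: Hq.
Qed.

Lemma exists_small d r : 0 < r -> (forall k, (d k < N k)%N) ->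
  exists n, cyl_len q n d <= r.
Proof.
move=> hr hd; have := Hmax; move/cvgr0Pnorm_lt => /(_ r hr) [N0 _ HN0].
exists N0; apply: le_trans (len_le_prodmax N0 hd) _.
exact: ltW (le_lt_trans (ler_norm _) (HN0 N0 (leqnn _))).
Qed.

Definition nst (x r : R) : nat := get [set n | cyl_len q n (dig x) <= r /\
  forall k, cyl_len q k (dig x) <= r -> (n <= k)%N].

Lemma nst_spec x r : good x -> 0 < r -> cyl_len q (nst x r) (dig x) <= r /\
  forall k, cyl_len q k (dig x) <= r -> (nst x r <= k)%N.
Proof.
move=> hx hr; have [hd _] := dig_spec hx.
have hex : exists n, (fun n => cyl_len q n (dig x) <= r) n by exact: exists_small.
suff : exists n, cyl_len q n (dig x) <= r /\
  forall k, cyl_len q k (dig x) <= r -> (n <= k)%N by move/getPex.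
by case: (ex_minnP hex) => n hn hmin; exists n; split => // k hk; apply: hmin.
Qed.

Definition stop x r := (cyl_left q (nst x r) (dig x),
  cyl_left q (nst x r) (dig x) + cyl_len q (nst x r) (dig x)).

Lemma stop_len x r : (stop x r).2 - (stop x r).1 = cyl_len q (nst x r) (dig x).
Proof. by rewrite /stop /= addrAC subrr add0r. Qed.

Lemma nst_ge1 x r : good x -> 0 < r < 1 -> (1 <= nst x r)%N.
Proof.
move=> hx /andP [hr0 hr1]; have [h _] := nst_spec hx hr0.
case E : (nst x r) h => [|//]; rewrite cyl_len0 => h.
by have := lt_le_trans hr1 h; rewrite ltxx.
Qed.

Lemma stop_cyl x r : good x -> 0 < r < 1 -> cyl_interiors N q (stop x r).
Proof.
move=> hx hr; have [hd _] := dig_spec hx.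
exists (nst x r), (dig x); split; first exact: nst_ge1.
by split => // j _; apply: hd.
Qed.

Lemma stop_in x r : good x -> oint (stop x r) x.
Proof. by move=> hx; have [_ h] := dig_spec hx; exact: h. Qed.

Lemma stop_len_le x r : good x -> 0 < r -> (stop x r).2 - (stop x r).1 <= r.
Proof. by move=> hx hr; rewrite stop_len; have [h _] := nst_spec hx hr. Qed.

Definition pq k := \prod_(i < N k) q i k.
Definition lm m := \prod_(k < m) pq k.

Lemma pq_gt0 k : 0 < pq k.
Proof. by apply: prodr_gt0 => -[i hi] _; apply: Hq. Qed.

Lemma pq_le1 k : pq k <= 1.
Proof.
apply: prodr_ile1 => -[i hi] _; rewrite ltW ?Hq //=.
exact: ltW (q_lt1 hi).
Qed.

Lemma pq_le k i : (i < N k)%N -> pq k <= q i k.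
Proof.
move=> hi; rewrite /pq (bigD1 (Ordinal hi)) //= ger_pMr; last exact: Hq.
apply: prodr_ile1 => -[j hj] _; rewrite ltW ?Hq //=.
exact: ltW (q_lt1 hj).
Qed.

Lemma lm_gt0 m : 0 < lm m.
Proof. by apply: prodr_gt0 => k _; apply: pq_gt0. Qed.

Lemma lm_mono n m : (n <= m)%N -> lm m <= lm n.
Proof.
move=> h; rewrite /lm -(subnKC h) big_split_ord /= ger_pMr.
  apply: prodr_ile1 => k _; rewrite pq_le1 andbT; exact: ltW (pq_gt0 _).
by apply: prodr_gt0 => k _; apply: pq_gt0.
Qed.

Lemma len_ge_lm n c : valid n c -> lm n <= cyl_len q n c.
Proof.
move=> h; apply: ler_prod => -[k hk] _.
by rewrite ltW ?pq_gt0 //= pq_le //; apply: h.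
Qed.

Lemma stop_lower del m x r : 0 <= del -> Good del m x -> 0 < r -> r < lm m ->
  r `^ (1 + del) <= (stop x r).2 - (stop x r).1.
Proof.
move=> hdel [hx hG] hr hrm; rewrite stop_len.
have [hd _] := dig_spec hx.
have hv : forall n, valid n (dig x) by move=> n j _; apply: hd.
have [hle hmin] := nst_spec hx hr.
case: (leqP (nst x r) m) => hnm.
  have := le_trans (lm_mono hnm) (len_ge_lm (hv _)).
  by move=> h; have := lt_le_trans hrm (le_trans h hle); rewrite ltxx.
case E : (nst x r) hnm hle hmin => [//|n] hnm hle hmin.
have hrn : r < cyl_len q n (dig x).
  by rewrite ltNge; apply/negP => h; have := hmin _ h; rewrite ltnn.
have hpos : 0 < cyl_len q n (dig x) by exact: cyl_len_gt0.
rewrite cyl_lenS.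
apply: (@le_trans _ _ (cyl_len q n (dig x) `^ (1 + del))).
  apply: ge0_ler_powR; rewrite ?nnegrE;
    [by rewrite addr_ge0 | exact: ltW hr | exact: ltW hpos | exact: ltW hrn].
rewrite powRD; last by rewrite (gt_eqF hpos) implybT.
rewrite powRr1 ?(ltW hpos) // ler_wpM2l ?(ltW hpos) //.
exact: hG.
Qed.

Lemma stop_disj_aux x y r z : good x -> good y -> 0 < r -> (nst x r <= nst y r)%N ->
  oint (stop x r) z -> oint (stop y r) z -> stop x r = stop y r.
Proof.
move=> hx hy hr hn zx zy.
have [hdx _] := dig_spec hx; have [hdy _] := dig_spec hy.
have hvx : forall n, valid n (dig x) by move=> n j _; apply: hdx.
have hvy : forall n, valid n (dig y) by move=> n j _; apply: hdy.
have zy' : incyl (nst x r) (dig y) z by exact: incyl_nest hn (hvy _) zy.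
have hp := incyl_uniq (hvx _) (hvy _) zx zy'.
have [e1 e2] := cyl_prefix hp.
have [hlex _] := nst_spec hx hr; have [_ hminy] := nst_spec hy hr.
have hn' : (nst y r <= nst x r)%N by apply: hminy; rewrite -e2.
have en : nst y r = nst x r by apply/eqP; rewrite eqn_leq hn' hn.
by rewrite /stop en e1 e2.
Qed.

Lemma stop_disj x y r : good x -> good y -> 0 < r -> stop x r <> stop y r ->
  oint (stop x r) `&` oint (stop y r) = set0.
Proof.
move=> hx hy hr hne; apply/seteqP; split => // z [zx zy].
case: (leqP (nst x r) (nst y r)) => h.
  by apply: hne; exact: stop_disj_aux h zx zy.
by apply: hne; apply/esym; apply: stop_disj_aux hy hx hr (ltnW h) zy zx.
Qed.

Lemma sum_const_seq (T : Type) (t : seq T) (c : R) : \sum_(i <- t) c = (size t)%:R * c.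
Proof.
elim: t => [|a t IH]; first by rewrite big_nil mul0r.
by rewrite big_cons IH /= -add1n natrD mulrDl mul1r.
Qed.

Lemma pkl_mono adm e e' E (t : seq (R * R)) : e <= e' -> pkl adm e E t -> pkl adm e' E t.
Proof.
move=> he [h1 h2 h3 h4]; split => // I hI.
by have [a b] := h3 I hI; split => //; apply: le_trans he.
Qed.

Lemma sumn_const_seq (T : Type) (t : seq T) (c : nat) : (\sum_(i <- t) c)%N = (c * size t)%N.
Proof.
elim: t => [|a t IH]; first by rewrite big_nil muln0.
by rewrite big_cons IH /= mulnS.
Qed.

Lemma aux_contra (a1 a2 b1 b2 y1 y2 rk : R) : y1 <= a1 -> b2 <= y2 -> y2 - y1 <= rk ->
  a2 <= b1 -> rk < (a2 - a1) + (b2 - b1) -> False.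
Proof. move=> *; lra. Qed.

Lemma class_bound del m alpha F (M rk : R) (s : seq (R * R)) :
  0 <= del -> 0 <= alpha -> F `<=` Good del m ->
  (forall t, pkl (cyl_interiors N q) rk F t -> \sum_(I <- t) len I `^ alpha <= M) ->
  0 < rk -> rk < 1 -> rk < lm m ->
  pkl setT rk F s -> (forall I, I \in s -> rk / 2 < len I) ->
  (size s)%:R * rk `^ ((1 + del) * alpha) <= 3 * M.
Proof.
move=> hdel ha hF hM hr0 hr1 hrm [hu _ hlen hdisj] hbig.
pose pt (I : R * R) := get (oint I `&` F).
have hpt : forall I, I \in s -> oint I (pt I) /\ F (pt I).
  by move=> I hI; have [_ h] := hlen I hI; have := getPex h.
have hgood : forall I, I \in s -> good (pt I).
  by move=> I hI; have [_ /hF [h _]] := hpt I hI.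
pose f I := stop (pt I) rk.
pose t := undup (map f s).
have hr01 : 0 < rk < 1 by rewrite hr0 hr1.
have ht : forall y, y \in t -> exists2 I, I \in s & y = f I.
  by move=> y; rewrite mem_undup => /mapP.
have hft : forall I, I \in s -> f I \in t.
  by move=> I hI; rewrite mem_undup; apply: map_f.
have hylen : forall y, y \in t -> len y <= rk.
  by move=> y /ht [I hI ->]; apply: stop_len_le => //; apply: hgood.
have hpt_t : pkl (cyl_interiors N q) rk F t.
  split.
  - exact: undup_uniq.
  - by move=> y /ht [I hI ->]; apply: stop_cyl => //; apply: hgood.
  - move=> y hy; split; first exact: hylen.
    have [I hI ey] := ht y hy; exists (pt I); split; last by have [] := hpt I hI.
    by rewrite ey; apply: stop_in; apply: hgood.
  - move=> y y' /ht [I hI ->] /ht [J hJ ->] hne.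
    by apply: stop_disj => //; apply: hgood.
have hsumt : (size t)%:R * rk `^ ((1 + del) * alpha) <= M.
  apply: le_trans (hM t hpt_t); rewrite -sum_const_seq big_seq [X in _ <= X]big_seq.
  apply: ler_sum => y /ht [I hI ->]; rewrite powRrM.
  have hlow : rk `^ (1 + del) <= len (f I).
    by apply: (@stop_lower del m (pt I) rk hdel _ hr0 hrm); exact: hF (hpt I hI).2.
  apply: ge0_ler_powR => //; rewrite ?nnegrE ?powR_ge0 //.
  exact: le_trans (powR_ge0 _ _) hlow.
have hfib : forall y, y \in t -> (count (fun I => f I == y) s <= 3)%N.
  move=> y hy.
  have hyl := hylen y hy.
  pose p1 (I : R * R) := (I.1 < y.1 < I.2).
  pose p2 (I : R * R) := (I.1 < y.2 < I.2).
  pose p3 (I : R * R) := (y.1 <= I.1) && (I.2 <= y.2).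
  apply: (leq_trans (count_sub3 (p1 := p1) (p2 := p2) (p3 := p3) _)).
    move=> I hI /eqP hfI.
    have [hxI _] := hpt I hI.
    have hxy : oint y (pt I) by rewrite -hfI; apply: stop_in; apply: hgood.
    move: hxI hxy; rewrite /oint /= => /andP [a1 a2] /andP [b1 b2].
    rewrite /p1 /p2 /p3.
    case: (ltP I.1 y.1) => c1 /=; first by rewrite (lt_trans b1 a2).
    case: (ltP y.2 I.2) => c2 /=; first by rewrite (lt_trans a1 b2) ?orbT.
    by rewrite ?c1 ?c2 ?orbT ?andbT.
  have hne_disj : forall I J, I \in s -> J \in s -> forall z, oint I z -> oint J z -> I = J.
    move=> I J hI hJ z zI zJ; case: (eqVneq I J) => // /eqP hIJ.
    have e := hdisj I J hI hJ hIJ.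
    have : (oint I `&` oint J) z by split.
    by rewrite e.
  have hlen_pos : forall I, I \in s -> I.1 < I.2.
    move=> I hI; have [_ [z [/andP [z1 z2] _]]] := hlen I hI.
    exact: lt_trans z1 z2.
  have c1 : (count p1 s <= 1)%N.
    apply: count_le1 => // I J hI hJ hpI hpJ; exact: hne_disj hI hJ y.1 hpI hpJ.
  have c2 : (count p2 s <= 1)%N.
    apply: count_le1 => // I J hI hJ hpI hpJ; exact: hne_disj hI hJ y.2 hpI hpJ.
  have c3 : (count p3 s <= 1)%N.
    apply: count_le1 => // I J hI hJ /andP [i1 i2] /andP [j1 j2].
    case: (eqVneq I J) => // /eqP hIJ.
    have hd := hdisj I J hI hJ hIJ.
    have lI := hbig I hI; have lJ := hbig J hJ.
    have : rk < len I + len J.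
      by rewrite [X in X < _]splitr ltrD.
    rewrite /len => h; move: hyl; rewrite /len => hyl.
    case: (disj_order (hlen_pos I hI) (hlen_pos J hJ) hd) => ho.
      by case: (aux_contra i1 j2 hyl ho h).
    by rewrite addrC in h; case: (aux_contra j1 i2 hyl ho h).
  by rewrite -[3%N]/(1 + 1 + 1)%N !leq_add.
have hsz : (size s <= 3 * size t)%N.
  apply: leq_trans (size_le_fibers hft) _.
  rewrite big_seq (@leq_trans (\sum_(y <- t | y \in t) 3)) //.
    by apply: leq_sum => y hy; apply: hfib.
  by rewrite -big_seq sumn_const_seq.
apply: (le_trans (y := (3 * size t)%:R * rk `^ ((1 + del) * alpha))).
  by rewrite ler_wpM2r ?powR_ge0 // ler_nat.
by rewrite natrM -mulrA ler_wpM2l.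
Qed.

Definition rr (eps : R) k := eps * (2^-1) ^+ k.

Lemma rrS eps k : rr eps k.+1 = rr eps k / 2.
Proof. by rewrite /rr exprSr mulrA. Qed.

Lemma rr_gt0 eps k : 0 < eps -> 0 < rr eps k.
Proof. by move=> he; rewrite /rr mulr_gt0 // exprn_gt0 // invr_gt0. Qed.

Lemma rr_le eps k : 0 < eps -> rr eps k <= eps.
Proof.
move=> he; rewrite /rr ger_pMr // exprn_ile1 // ?invr_ge0 // invf_le1 //.
by rewrite ler1n.
Qed.

Lemma class_exists eps l : 0 < l -> l <= eps -> exists k, rr eps k.+1 < l /\ l <= rr eps k.
Proof.
move=> hl hle.
have he : 0 < eps by exact: lt_le_trans hl hle.
have hex : exists k, (fun k => rr eps k.+1 < l) k.
  pose n := Num.Def.archi_bound (eps / l).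
  have hn : eps / l < n%:R by apply: archi_boundP; rewrite divr_ge0 // ltW.
  have h2 : n%:R <= 2 ^+ n :> R.
    by rewrite -natrX ler_nat ltnW // ltn_expl.
  exists n; apply: le_lt_trans (_ : rr eps n < l).
    by rewrite rrS ger_pMr ?rr_gt0 // invf_le1 // ler1n.
  rewrite /rr exprVn -ltr_pdivlMr ?exprn_gt0 // mulrC -ltr_pdivrMr //.
  by rewrite invrK; apply: lt_le_trans hn h2.
case: (ex_minnP hex) => k hk hmin; exists k; split => //.
case: k hk hmin => [|k] hk hmin; first by rewrite /rr expr0 mulr1.
by rewrite leNgt; apply/negP => h; have := hmin k h; rewrite ltnn.
Qed.

Lemma cover_K (T : eqType) (s : seq T) (P : nat -> pred T) :
  (forall I, I \in s -> exists k, P k I) -> exists K, forall I, I \in s -> exists2 k, (k < K)%N & P k I.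
Proof.
elim: s => [|a s IH] h; first by exists 0%N.
have [K hK] := IH (fun I hI => h I (introT orP (or_intror hI))).
have [k hk] := h a (mem_head _ _).
exists (maxn K k.+1) => I; rewrite in_cons => /orP [/eqP ->|hI].
  by exists k => //; rewrite leq_max leqnn orbT.
by have [j hj hP] := hK I hI; exists j => //; rewrite leq_max hj.
Qed.

Lemma key_bound del m alpha beta F (M eps0 eps : R) (s : seq (R * R)) :
  0 <= del -> 0 <= alpha -> (1 + del) * alpha < beta -> F `<=` Good del m ->
  (forall t, pkl (cyl_interiors N q) eps0 F t -> \sum_(I <- t) len I `^ alpha <= M) ->
  0 < eps -> eps <= eps0 -> eps < lm m -> eps < 1 ->
  pkl setT eps F s ->
  \sum_(I <- s) len I `^ beta <=
    3 * M * (1 - (2^-1) `^ (beta - (1 + del) * alpha))^-1 * eps `^ (beta - (1 + del) * alpha).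
Proof.
move=> hdel ha hb hF hM he he0 hem he1 [hu hadm hlen hdisj].
set g := (1 + del) * alpha; set rho := beta - g.
have hg : 0 <= g by rewrite mulr_ge0 // addr_ge0.
have hrho : 0 < rho by rewrite subr_gt0.
have hbeta : 0 <= beta by exact: le_trans hg (ltW hb).
pose cls k (I : R * R) := (rr eps k.+1 < len I) && (len I <= rr eps k).
have hcls : forall I, I \in s -> exists k, cls k I.
  move=> I hI; have [h1 [z [/andP [z1 z2] _]]] := hlen I hI.
  have hl0 : 0 < len I by rewrite /len subr_gt0 (lt_trans z1 z2).
  have [k [k1 k2]] := class_exists hl0 h1.
  by exists k; rewrite /cls k1 k2.
have [K hK] := cover_K hcls.
have hM0 : 0 <= M by have := hM [::]; rewrite big_nil; apply; split.
apply: le_trans (sum_split_cls _ hK) _ => [I|]; first exact: powR_ge0.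
pose x := (2^-1 : R) `^ rho.
have hx0 : 0 <= x by exact: powR_ge0.
have hx1 : x < 1.
  rewrite /x /powR invr_eq0 pnatr_eq0 /= expR_lt1 pmulr_rlt0 //.
  by rewrite ln_lt0 // invr_gt0 ltr0n /= invf_lt1 // ltr1n.
have hrr : forall k, rr eps k `^ rho = eps `^ rho * x ^+ k.
  move=> k; rewrite /rr powRM ?exprn_ge0 ?invr_ge0 ?ltW //.
  by rewrite -powR_mulrn ?invr_ge0 // powRAC powR_mulrn.
have hk : forall k, \sum_(I <- s | cls k I) len I `^ beta <= 3 * M * (eps `^ rho * x ^+ k).
  move=> k.
  have hr0 : 0 < rr eps k by exact: rr_gt0.
  have hrle : rr eps k <= eps by exact: rr_le.
  rewrite -big_filter; set c := [seq I <- s | cls k I].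
  have hc : forall I, I \in c -> cls k I /\ I \in s by move=> I; rewrite mem_filter => /andP.
  have hpc : pkl setT (rr eps k) F c.
    split.
    - exact: filter_uniq.
    - by [].
    - move=> I /hc [/andP [_ h2] hI]; split => //; exact: (hlen I hI).2.
    - by move=> I J /hc [_ hI] /hc [_ hJ]; apply: hdisj.
  have hbig : forall I, I \in c -> rr eps k / 2 < len I.
    by move=> I /hc [/andP [h1 _] _]; rewrite -rrS.
  have hMk : forall t, pkl (cyl_interiors N q) (rr eps k) F t -> \sum_(I <- t) len I `^ alpha <= M.
    by move=> t ht; apply: hM; apply: pkl_mono ht; apply: le_trans hrle he0.
  have hcb := class_bound hdel ha hF hMk hr0 (le_lt_trans hrle he1) (le_lt_trans hrle hem) hpc hbig.
  apply: (@le_trans _ _ ((size c)%:R * rr eps k `^ beta)).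
    rewrite -sum_const_seq big_seq [X in _ <= X]big_seq; apply: ler_sum => I hI.
    have [/andP [h1 h2] _] := hc I hI.
    apply: ge0_ler_powR => //; rewrite ?nnegrE.
    - exact: ltW (lt_trans (rr_gt0 _ he) h1).
    - exact: ltW (rr_gt0 _ he).
  have eb : beta = g + rho by rewrite /rho addrC subrK.
  rewrite eb powRD; last by rewrite (gt_eqF (rr_gt0 k he)) implybT.
  rewrite -(hrr k) mulrA ler_wpM2r ?powR_ge0 //.
apply: (@le_trans _ _ (\sum_(k < K) 3 * M * (eps `^ rho * x ^+ k))).
  by apply: ler_sum => k _; apply: hk.
have -> : \sum_(k < K) 3 * M * (eps `^ rho * x ^+ k) = 3 * M * eps `^ rho * \sum_(k < K) x ^+ k.
  by rewrite mulr_sumr; apply: eq_bigr => k _; rewrite !mulrA.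
apply: (@le_trans _ _ (3 * M * eps `^ rho * (1 - x)^-1)).
  by rewrite ler_wpM2l ?mulr_ge0 ?powR_ge0 // geom_le // hx0 hx1.
by rewrite mulrAC.
Qed.

Lemma half_pow_lt1 rho : 0 < rho -> (2^-1 : R) `^ rho < 1.
Proof.
move=> hrho; rewrite /powR invr_eq0 pnatr_eq0 /= expR_lt1 pmulr_rlt0 //.
by rewrite ln_lt0 // invr_gt0 ltr0n /= invf_lt1 // ltr1n.
Qed.

Lemma small_eps (C rho eta e1 : R) : 0 <= C -> 0 < rho -> 0 < eta -> 0 < e1 ->
  exists eps, [/\ 0 < eps, eps <= e1 & C * eps `^ rho <= eta].
Proof.
move=> hC hrho heta he1.
set y := eta / (C + 1).
have hy : 0 < y by rewrite divr_gt0 // ltr_wpDl.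
exists (Num.min e1 (y `^ rho^-1)); split.
- by rewrite lt_min he1 powR_gt0.
- by rewrite ge_min lexx.
have h1 : Num.min e1 (y `^ rho^-1) `^ rho <= y.
  apply: (@le_trans _ _ ((y `^ rho^-1) `^ rho)).
    apply: ge0_ler_powR; rewrite ?nnegrE ?powR_ge0 ?(ltW hrho) //.
      by apply: ltW; rewrite lt_min he1 powR_gt0.
    by rewrite ge_min lexx orbT.
  by rewrite -powRrM mulVf ?gt_eqF // powRr1 // ltW.
apply: (@le_trans _ _ (C * y)); first by rewrite ler_wpM2l.
rewrite /y mulrA ler_pdivrMr ?ltr_wpDl // mulrC ler_wpM2l ?ltW //.
by rewrite ltrDl.
Qed.

Lemma key del m alpha beta F :
  0 <= del -> 0 <= alpha -> (1 + del) * alpha < beta -> F `<=` Good del m ->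
  (P0 (cyl_interiors N q) alpha F < +oo)%E -> P0 setT beta F = 0%E.
Proof.
move=> hdel ha hb hF hfin.
apply/eqP; rewrite eq_le P0_ge0 andbT.
have [_ [eps0 he0 <-] hy] := ereal_inf_lt hfin.
set Y := Peps _ _ _ _ in hy.
have Yfin : Y \is a fin_num by rewrite ge0_fin_numE // Peps_ge0.
set M := fine Y.
have hM : forall t, pkl (cyl_interiors N q) eps0 F t -> \sum_(I <- t) len I `^ alpha <= M.
  by move=> t ht; rewrite -lee_fin /M fineK //; apply: Peps_ge.
have hM0 : 0 <= M by have := hM [::]; rewrite big_nil; apply; split.
set rho := beta - (1 + del) * alpha.
have hrho : 0 < rho by rewrite subr_gt0.
set C := 3 * M * (1 - (2^-1 : R) `^ rho)^-1.
have hC : 0 <= C.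
  by rewrite /C mulr_ge0 ?mulr_ge0 // invr_ge0 subr_ge0 ltW // half_pow_lt1.
apply/lee_addgt0Pr => eta heta; rewrite add0e.
set e1 := Num.min eps0 (Num.min (lm m / 2) (2^-1)).
have he1 : 0 < e1 by rewrite !lt_min he0 divr_gt0 ?lm_gt0 // invr_gt0 ltr0n.
have [eps [hep hepe1 hCe]] := small_eps hC hrho heta he1.
apply: (le_trans (P0_le _ _ _ hep)).
apply: Peps_le => s hs; rewrite lee_fin.
apply: le_trans hCe.
apply: key_bound hdel ha hb hF hM hep _ _ _ hs.
- by apply: le_trans hepe1 _; rewrite ge_min lexx.
- apply: le_lt_trans hepe1 _; rewrite gt_min; apply/orP; right.
  by rewrite gt_min ltr_pdivrMr ?ltr_pMr ?lm_gt0 // ltr1n.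
- apply: le_lt_trans hepe1 _; rewrite gt_min; apply/orP; right.
  by rewrite gt_min invf_lt1 // ltr1n orbT.
Qed.

Fixpoint pairs n : seq (R * R) :=
  if n is n'.+1 then
    [seq (p.1 + beta q i n' * p.2, p.2 * q i n') | p <- pairs n', i <- iota 0 (N n')]
  else [:: (0, 1)].

Lemma pairs_mem n c : valid n c -> (cyl_left q n c, cyl_len q n c) \in pairs n.
Proof.
elim: n => [|n IH] h; first by rewrite cyl_left0 cyl_len0 mem_seq1.
rewrite cyl_leftS cyl_lenS /=.
apply: (allpairs_f (fun p i => (p.1 + beta q i n * p.2, p.2 * q i n)) (IH (validS h))).
by rewrite mem_iota add0n; apply: h.
Qed.

Definition ends n := [seq p.1 | p <- pairs n] ++ [seq p.1 + p.2 | p <- pairs n].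

Definition Bad n := [set x : R | 0 <= x <= 1 /\ forall c, valid n c -> ~ incyl n c x].

Lemma Bad_ends n x : Bad n x -> x \in ends n.
Proof.
move=> [hx hB]; have [c [hv /andP [h1 h2]]] := cover hx n.
have hp := pairs_mem hv.
move: h1; rewrite le_eqVlt => /orP [/eqP h1|h1].
  by rewrite mem_cat; apply/orP; left; rewrite -h1; apply: (map_f (fun p : R * R => p.1) hp).
move: h2; rewrite le_eqVlt => /orP [/eqP h2|h2].
  by rewrite mem_cat; apply/orP; right; rewrite h2; apply: (map_f (fun p : R * R => p.1 + p.2) hp).
by exfalso; apply: (hB c hv); rewrite /incyl h1 h2.
Qed.

Lemma P0_finite (e : seq R) F beta : 0 < beta -> F `<=` [set x | x \in e] ->
  P0 setT beta F = 0%E.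
Proof.
move=> hb hF; apply/eqP; rewrite eq_le P0_ge0 andbT.
apply/lee_addgt0Pr => eta heta; rewrite add0e.
have [eps [hep _ hC]] := @small_eps (size e)%:R beta eta 1 (ler0n _ _) hb heta ltr01.
apply: (le_trans (P0_le _ _ _ hep)).
apply: Peps_le => s [hu _ hlen hdisj]; rewrite lee_fin; apply: le_trans hC.
pose pt (I : R * R) := get (oint I `&` F).
have hpt : forall I, I \in s -> oint I (pt I) /\ F (pt I).
  by move=> I hI; have [_ h] := hlen I hI; have := getPex h.
have hsz : (size s <= size e)%N.
  rewrite -(size_map pt); apply: uniq_leq_size.
    rewrite map_inj_in_uniq // => I J hI hJ e1.
    case: (eqVneq I J) => // /eqP hIJ; have hd := hdisj I J hI hJ hIJ.
    have : (oint I `&` oint J) (pt I) by split; [exact: (hpt I hI).1 | rewrite e1; exact: (hpt J hJ).1].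
    by rewrite hd.
  by move=> z /mapP [I hI ->]; exact: hF (hpt I hI).2.
apply: (@le_trans _ _ (\sum_(I <- s) eps `^ beta)).
  rewrite big_seq [X in _ <= X]big_seq; apply: ler_sum => I hI.
  apply: ge0_ler_powR; rewrite ?nnegrE ?(ltW hb) ?(ltW hep) //; last exact: (hlen I hI).1.
  have [_ [z [/andP [z1 z2] _]]] := hlen I hI.
  by rewrite /len subr_ge0 ltW // (lt_trans z1 z2).
by rewrite sum_const_seq ler_wpM2r ?powR_ge0 // ler_nat.
Qed.

Lemma pkl_sub (adm adm' : set (R * R)) (eps : R) (E E' : set R) (t : seq (R * R)) : adm `<=` adm' -> E `<=` E' ->
  pkl adm eps E t -> pkl adm' eps E' t.
Proof.
move=> hA hE [h1 h2 h3 h4]; split => // I hI; first by apply: hA; apply: h2.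
have [l [z [zI zE]]] := h3 I hI; split => //; exists z; split => //; exact: hE.
Qed.

Lemma Peps_mono (adm adm' : set (R * R)) (a eps : R) (E E' : set R) : adm `<=` adm' -> E `<=` E' ->
  (Peps adm a eps E <= Peps adm' a eps E')%E.
Proof. by move=> hA hE; apply: Peps_le => t ht; apply: Peps_ge; exact: pkl_sub hA hE ht. Qed.

Lemma P0_mono (adm adm' : set (R * R)) (a : R) (E E' : set R) : adm `<=` adm' -> E `<=` E' ->
  (P0 adm a E <= P0 adm' a E')%E.
Proof.
move=> hA hE; apply: le_ereal_inf_tmp => _ [e he <-].
exact: le_trans (P0_le _ _ _ he) (Peps_mono a e hA hE).
Qed.

Lemma Pmeas_mono (adm adm' : set (R * R)) (a : R) (E : set R) : adm `<=` adm' -> (Pmeas adm a E <= Pmeas adm' a E)%E.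
Proof.
move=> hA; apply: le_ereal_inf_tmp => _ [Es hEs <-].
apply: (@le_trans _ _ (\sum_(0 <= n <oo) P0 adm a (Es n))%E).
  by apply: ereal_inf_lbound; exists Es.
apply: lee_nneseries => [n _ _|n _]; first exact: P0_ge0.
exact: P0_mono.
Qed.

Lemma main_dir E a eps : E `<=` `[0, 1] -> 0 <= a -> Pmeas (cyl_interiors N q) a E = 0%E ->
  0 < eps -> Pmeas setT (a + eps) E = 0%E.
Proof.
move=> hE ha hP heps.
apply/eqP; rewrite eq_le Pmeas_ge0 andbT.
have hlt : (Pmeas (cyl_interiors N q) a E < 1)%E by rewrite hP lte01.
have [_ [Es hEs <-] hsum] := ereal_inf_lt hlt.
set u := fun j => P0 (cyl_interiors N q) a (Es j).
have hu0 : forall j, (0 <= u j)%E by move=> j; apply: P0_ge0.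
have hufin : forall j, (u j < +oo)%E.
  move=> j; apply: le_lt_trans (lt_trans hsum (ltry _)).
  apply: (@le_trans _ _ (\sum_(0 <= i < j.+1) u i)%E); last first.
    by apply: nneseries_lim_ge => n _ _; apply: hu0.
  rewrite big_nat_recr //=; apply: leeDr.
  by apply: sume_ge0 => n _; apply: hu0.
pose del := eps / (a + 1).
have hdel : 0 < del by rewrite divr_gt0 // ltr_wpDl.
have hb : (1 + del) * a < a + eps.
  rewrite mulrDl mul1r ltrD2l /del mulrAC ltr_pdivrMr ?ltr_wpDl //.
  by rewrite ltr_pM2l // ltrDl.
have hab : 0 < a + eps by rewrite ltr_wpDl.
pose G (p : nat) : set R :=
  match (unpickle p : option ((nat * nat) + nat)%type) with
  | Some (inl (j, mm)) => Es j `&` Good del mm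
  | Some (inr n) => Bad n
  | None => set0
  end.
have hG : forall p, P0 setT (a + eps) (G p) = 0%E.
  move=> p; rewrite /G; case: (unpickle p) => [[[j mm]|n]|].
  - apply: key (ltW hdel) ha hb _ _; first exact: subIsetr.
    apply: le_lt_trans (hufin j); apply: P0_mono => //; exact: subIsetl.
  - by apply: (P0_finite (e := ends n)) => // x; apply: Bad_ends.
  - by apply: (P0_finite (e := [::])).
apply: (@le_trans _ _ (\sum_(0 <= p <oo) P0 setT (a + eps) (G p))%E).
  apply: ereal_inf_lbound; exists G => //.
  move=> x hx; have hx01 : 0 <= x <= 1 by move: (hE x hx); rewrite /= in_itv.
  case: (pselect (good x)) => hg.
    have [mm hmm] := Good_exists hdel hg.
    have [j _ hj] := hEs x hx.
    exists (pickle (inl (j, mm) : ((nat * nat) + nat)%type)) => //.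
    by rewrite /G pickleK.
  have [n hn] : exists n, ~ exists c, valid n c /\ incyl n c x.
    by apply/existsNP => hall; apply: hg; split.
  exists (pickle (inr n : ((nat * nat) + nat)%type)) => //.
  by rewrite /G pickleK; split => // c hv hin; apply: hn; exists c.
by rewrite eseries0 // => i _ _.
Qed.

End Cyl.

Unset Implicit Arguments.

Theorem lemma1 (R : realType) (N : nat -> nat) (q : nat -> nat -> R) :
  Qexpansion N q ->
  (forall d : nat -> nat, (forall k, (d k < N k)%N) ->
     (fun k => ln (q (d k) k) / ln (\prod_(j < k) q (d j) j)) @ \oo --> (0 : R)) ->
  forall E : set R, E `<=` `[0, 1] ->
    dimP (cyl_interiors N q) E = dimP setT E.
Proof.
move=> [HN Hq Hs Hmax] Hlim E hE.
apply/eqP; rewrite eq_le; apply/andP; split.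
- apply: ereal_inf_le_tmp => _ [a [ha hU] <-]; exists a => //; split => //.
  apply/eqP; rewrite eq_le Pmeas_ge0 andbT -hU; exact: Pmeas_mono.
- apply: le_ereal_inf_tmp => _ [a [ha hP] <-].
  apply/lee_addgt0Pr => eps heps.
  apply: ereal_inf_lbound; exists (a + eps); last by rewrite EFinD.
  split; first by rewrite addr_ge0 // ltW.
  exact: (main_dir HN Hq Hs Hmax Hlim hE ha hP heps).
Qed.
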